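(* Under any CLC choice model, if a price vector $\mathbf p\in[0,\bar v]^N$ is a local Nash equilibrium, then there exists an ordering $\pi$ of the sellers such that $(\pi,\mathbf p)$ is a valid order-price pair.
   Context: CLC setup. There are $N$ sellers $\mathcal N=\{1,\dots,N\}$, each selling one item, and a unit mass of customers, each buying at most one item. Items have a price attribute (indexed $0$) and $K$ non-price attributes indexed by $\mathcal A=\{1,\dots,K\}$; $\bar{\mathcal A}=\{0\}\cup\mathcal A$. Non-price attribute $k$ takes values in an arbitrary set $\mathcal V^k$; prices lie in $\mathcal V=[0,\bar v]$ for a fixed $\bar v>0$. Seller $i$'s item has fixed non-price attribute values $v_i^k\in\mathcal V^k$ and price $p_i\in\mathcal V$ chosen by seller $i$; $\mathbf p=(p_1,\dots,p_N)$, and $v_i^0:=p_i$. Each customer $c$ has: a strict total order $\succ_c$ on $\bar{\mathcal A}$ (attribute importance); for each attribute $k$ a complete transitive weak preference $\succsim_c^k$ on its value set, with strict part $\succ_c^k$ and indifference $\sim_c^k$ (and $v\sim_c^k v$), where for price $p\succ_c^0p'$ iff $p<p'$ and $p\sim_c^0p'$ iff $p=p'$; a willingness-to-pay $w_c\in[0,\bar v]$; a set $\mathcal C_c\subseteq\mathcal V^1\times\cdots\times\mathcal V^K$ of admissible non-price attribute vectors; and a strict tie-breaking order over sellers. Customer $c$ lexicographically prefers item $i$ to item $j$ if there is an attribute $k$ with $v_i^{k'}\sim_c^{k'}v_j^{k'}$ for all $k'\succ_c k$ and $v_i^k\succ_c^k v_j^k$; if no such $k$ exists, the tie-breaking order decides.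 Under the Consider-then-Choose with Lexicographic Choice (CLC) model, customer $c$ forms the consideration set $\mathcal N_c=\{i\in\mathcal N: p_i\le w_c,\ (v_i^1,\dots,v_i^K)\in\mathcal C_c\}$, buys nothing if it is empty, and otherwise buys the top-ranked item of $\mathcal N_c$ under this lexicographic order (with tie-breaking). An instance of CLC choice is a joint distribution $\mathcal G$ of these customer primitives; the conditional distribution of $w_c$ given the other primitives is assumed to have a Lipschitz continuous density. $D_i(\mathbf p)$ is the probability a customer buys from seller $i$ and $R_i(\mathbf p)=p_iD_i(\mathbf p)$ is seller $i$'s revenue, also written $R_i(p_i,\mathbf p_{-i})$. Local Nash equilibrium (LNE): $\mathbf p$ with $p_i\in\mathcal V$ for all $i$ such that there exist open neighborhoods $\mathcal U_i\subseteq\mathbb R$ with $p_i\in\mathcal U_i$ and $p_i\in\arg\max_{p\in\overline{\mathcal U_i}}R_i(p,\mathbf p_{-i})$ for all $i$ ($\overline{\mathcal U}$ is the closure). Notation: for $\mathcal S\subseteq\mathcal N$, $\mathbf p^{\mathcal S}$ is the price vector keeping the prices of sellers in $\mathcal S$ and setting the prices of all sellers outside $\mathcal S$ to $0$; $p^{\min}(\mathcal S)=\min_{j\in\mathcal S}p_j$, with $p^{\min}(\emptyset)=\bar v$. Valid order-price pair (VOP): a pair $(\pi,\mathbf p)$ where $\pi:[N]\to\mathcal N$ is a bijection ($\pi(l)$ is the seller of rank $l$) and $\mathbf p\in\mathcal V^N$ satisfies (1) $0\le p_{\pi(N)}\le\cdots\le p_{\pi(1)}\le\bar v$, and (2) letting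 $\mathcal S_1=\emptyset$ and $\mathcal S_l=\{\pi(j):j<l\}$, for every $l$ the price $p_{\pi(l)}$ is a local maximum of $p\mapsto R_{\pi(l)}(p,\mathbf p^{\mathcal S_l}_{-\pi(l)})$ on the interval $[0,p^{\min}(\mathcal S_l)]$. *)

(* Defs.v *)
From HB Require Import structures.
From mathcomp Require Import all_boot all_order all_algebra all_fingroup.
From mathcomp Require Import all_classical all_reals all_analysis.
Set Implicit Arguments. Unset Strict Implicit. Unset Printing Implicit Defensive.
Import Order.TTheory GRing.Theory Num.Theory.
Import numFieldNormedType.Exports.
Local Open Scope classical_set_scope.
Local Open Scope ring_scope.

(* Attributes: [None] is the price attribute (index 0),
   [Some k] (k : 'I_K) is non-price attribute k+1. *)
Notation attr K := (option 'I_K).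

(* Customer primitives other than the willingness-to-pay w_c. *)
Record CLCprims (N K : nat) (V : 'I_K -> Type) := CLCPrims {
  imp : attr K -> attr K -> Prop;          (* a >_c b : a more important than b *)
  pref : forall k : 'I_K, V k -> V k -> Prop;
  adm : set (forall k : 'I_K, V k);
  tb : 'I_N -> 'I_N -> Prop                 (* i ranked before j by tie-breaking *)
}.
Arguments imp {N K V} c.
Arguments pref {N K V} c k.
Arguments adm {N K V} c.
Arguments tb {N K V} c.

Definition strict_total_order (T : Type) (r : T -> T -> Prop) :=
  [/\ forall x, ~ r x x,
      forall x y z, r x y -> r y z -> r x z
    & forall x y, x <> y -> r x y \/ r y x].

Definition weak_order (T : Type) (r : T -> T -> Prop) :=
  (forall x y, r x y \/ r y x) /\ (forall x y z, r x y -> r y z -> r x z).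

Definition valid_prims N K (V : 'I_K -> Type) (c : CLCprims N V) :=
  [/\ strict_total_order (imp c),
      forall k, weak_order (pref c k)
    & strict_total_order (tb c)].

Section Choice.
Context (R : realType) (N K : nat) (V : 'I_K -> Type)
        (vals : 'I_N -> forall k : 'I_K, V k).

Definition indiff (c : CLCprims N V) (p : 'I_N -> R) (a : attr K) (i j : 'I_N) : Prop :=
  match a with
  | None => p i = p j
  | Some k => pref c k (vals i k) (vals j k) /\ pref c k (vals j k) (vals i k)
  end.

Definition sbetter (c : CLCprims N V) (p : 'I_N -> R) (a : attr K) (i j : 'I_N) : Prop :=
  match a with
  | None => p i < p j
  | Some k => pref c k (vals i k) (vals j k) /\ ~ pref c k (vals j k) (vals i k)
  end.

Definition lexpref (c : CLCprims N V) (p : 'I_N -> R) (i j : 'I_N) : Prop :=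
  exists a : attr K, (forall a', imp c a' a -> indiff c p a' i j) /\ sbetter c p a i j.

Definition ranks_above (c : CLCprims N V) (p : 'I_N -> R) (i j : 'I_N) : Prop :=
  lexpref c p i j \/ (~ lexpref c p i j /\ ~ lexpref c p j i /\ tb c i j).

Definition considers (c : CLCprims N V) (w : R) (p : 'I_N -> R) (i : 'I_N) : Prop := p i <= w /\ adm c (vals i).

Definition buys (c : CLCprims N V) (w : R) (p : 'I_N -> R) (i : 'I_N) : Prop :=
  considers c w p i /\ forall j, considers c w p j -> j <> i -> ranks_above c p i j.

End Choice.

Section Instance.
Context (R : realType) (N K : nat) (V : 'I_K -> Type)
        (vals : 'I_N -> forall k : 'I_K, V k) (vbar : R)
        (d : measure_display) (Theta : measurableType d)
        (mu : probability Theta R) (other : Theta -> CLCprims N V)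
        (f : Theta -> R -> R).

Definition prims_measurable : Prop :=
  [/\ forall a b, measurable [set t : Theta | imp (other t) a b],
      forall (k : 'I_K) (i j : 'I_N),
        measurable [set t : Theta | pref (other t) k (vals i k) (vals j k)],
      forall i, measurable [set t : Theta | adm (other t) (vals i)]
    & forall i j, measurable [set t : Theta | tb (other t) i j]].

(* f t is the conditional density of w_c on [0, vbar] given the other
   primitives t; it is Lipschitz continuous. *)
Definition lipschitz_cond_density : Prop :=
  [/\ forall t w, 0 <= f t w,
      measurable_fun [set: Theta * R] (fun x : Theta * R => f x.1 x.2),
      forall t, (\int[lebesgue_measure]_(w in `[0%R, vbar]) (f t w)%:E = 1)%E
    & forall t, exists L : R, forall w w', w \in `[0, vbar] -> w' \in `[0, vbar] ->
        `|f t w - f t w'| <= L * `|w - w'|].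

(* D_i(p): probability that a customer buys from seller i. The joint law of
   the primitives is  mu(dt) f(t,w) dw. *)
Definition demand (i : 'I_N) (p : 'I_N -> R) : R :=
  fine (\int[mu]_t
          \int[lebesgue_measure]_(w in `[0%R, vbar])
             (\1_[set w' | buys vals (other t) w' p i] w * f t w)%:E).

Definition revenue (i : 'I_N) (p : 'I_N -> R) : R := p i * demand i p.

End Instance.

Definition upd (R : Type) N (p : 'I_N -> R) (i : 'I_N) (q : R) : 'I_N -> R :=
  fun j => if j == i then q else p j.

Definition restrict (R : realType) N (p : 'I_N -> R) (S : {set 'I_N}) : 'I_N -> R :=
  fun j => if j \in S then p j else 0.

Definition pmin (R : realType) N (vbar : R) (p : 'I_N -> R) (S : {set 'I_N}) : R :=
  if [pick j in S] is Some j0 then \big[Num.min/p j0]_(j in S) p j else vbar.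

Definition local_nash (R : realType) N (vbar : R)
    (Rev : 'I_N -> ('I_N -> R) -> R) (p : 'I_N -> R) : Prop :=
  (forall i, 0 <= p i <= vbar) /\
  forall i, exists U : set R, [/\ open U, U (p i) &
    forall q, closure U q -> Rev i (upd p i q) <= Rev i p].

Definition local_max_on (R : realType) (g : R -> R) (lo hi x : R) : Prop :=
  lo <= x <= hi /\
  exists e : R, 0 < e /\ forall q, lo <= q <= hi -> `|q - x| < e -> g q <= g x.

Definition valid_order_price (R : realType) N (vbar : R)
    (Rev : 'I_N -> ('I_N -> R) -> R) (pi : {perm 'I_N}) (p : 'I_N -> R) : Prop :=
  [/\ forall i, 0 <= p i <= vbar,
      (forall l l' : 'I_N, (l <= l')%N -> p (pi l') <= p (pi l))
    & forall l : 'I_N,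
        let S := [set pi j | j : 'I_N & (j < l)%N] in
        local_max_on (fun q => Rev (pi l) (upd (restrict p S) (pi l) q))
                     0 (pmin vbar p S) (p (pi l))].

(* Main.v *)
Require Import Defs.
From HB Require Import structures.
From mathcomp Require Import all_boot all_order all_algebra all_fingroup.
From mathcomp Require Import all_classical all_reals all_analysis.
From mathcomp Require Import measurable_realfun lebesgue_integral.
From mathcomp Require Import lra.
Import Order.TTheory GRing.Theory Num.Theory.
Import numFieldNormedType.Exports.
Local Open Scope classical_set_scope.
Local Open Scope ring_scope.
Set Implicit Arguments. Unset Strict Implicit. Unset Printing Implicit Defensive.

Section Comb.
Context (R : realType) (N K : nat) (V : 'I_K -> Type)
        (vals : 'I_N -> forall k : 'I_K, V k) (c : CLCprims N V)
        (hc : valid_prims c).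

Let imp_irr : forall x, ~ imp c x x.
Proof. by case: hc => -[]. Qed.
Let imp_trans : forall x y z, imp c x y -> imp c y z -> imp c x z.
Proof. by case: hc => -[]. Qed.
Let imp_tot : forall x y, x <> y -> imp c x y \/ imp c y x.
Proof. by case: hc => -[]. Qed.
Let pref_tot k : forall x y, pref c k x y \/ pref c k y x.
Proof. by case: hc => _ /(_ k) []. Qed.
Let pref_trans k : forall x y z, pref c k x y -> pref c k y z -> pref c k x z.
Proof. by case: hc => _ /(_ k) []. Qed.
Let tb_irr : forall x, ~ tb c x x.
Proof. by case: hc => _ _ []. Qed.
Let tb_trans : forall x y z, tb c x y -> tb c y z -> tb c x z.
Proof. by case: hc => _ _ []. Qed.
Let tb_tot : forall x y, x <> y -> tb c x y \/ tb c y x.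
Proof. by case: hc => _ _ []. Qed.

Implicit Types (p : 'I_N -> R) (a : attr K) (i j k : 'I_N).

Lemma indiff_sym p a i j : indiff vals c p a i j -> indiff vals c p a j i.
Proof. by case: a => [k|] /= => [[]|->]. Qed.

Lemma indiff_trans p a i j k : indiff vals c p a i j -> indiff vals c p a j k ->
  indiff vals c p a i k.
Proof.
case: a => [k'|] /=; last by move=> -> ->.
by move=> [h1 h2] [h3 h4]; split; apply: pref_trans; eauto.
Qed.

Lemma sbetter_indiff p a i j k : sbetter vals c p a i j -> indiff vals c p a j k ->
  sbetter vals c p a i k.
Proof.
case: a => [k'|] /=; last by move=> ? <-.
move=> [h1 h2] [h3 h4]; split; first by apply: pref_trans; eauto.
by move=> h; apply: h2; apply: pref_trans; eauto.
Qed.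

Lemma indiff_sbetter p a i j k : indiff vals c p a i j -> sbetter vals c p a j k ->
  sbetter vals c p a i k.
Proof.
case: a => [k'|] /=; last by move=> ->.
move=> [h1 h2] [h3 h4]; split; first by apply: pref_trans; eauto.
by move=> h; apply: h4; apply: pref_trans; eauto.
Qed.

Lemma sbetter_not_indiff p a i j : sbetter vals c p a i j -> ~ indiff vals c p a i j.
Proof. by case: a => [k'|] /= => [[_ h] [_ h']//|h e]; move: h; rewrite e ltxx. Qed.

Lemma sbetter_asym p a i j : sbetter vals c p a i j -> ~ sbetter vals c p a j i.
Proof.
case: a => [k'|] /=; first by move=> [h1 h2] [h3 h4].
by move=> h1 h2; have := lt_trans h1 h2; rewrite ltxx.
Qed.

Lemma sbetter_trans p a i j k : sbetter vals c p a i j -> sbetter vals c p a j k ->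
  sbetter vals c p a i k.
Proof.
case: a => [k'|] /=; last exact: lt_trans.
move=> [h1 h2] [h3 h4]; split; first by apply: pref_trans; eauto.
by move=> h; apply: h4; apply: pref_trans; eauto.
Qed.

Lemma lex_trans p i j k : lexpref vals c p i j -> lexpref vals c p j k ->
  lexpref vals c p i k.
Proof.
move=> [a [Ha Sa]] [b [Hb Sb]].
have [eab|nab] := pselect (a = b).
  subst b; exists a; split; last exact: sbetter_trans Sa Sb.
  by move=> a' ha; apply: indiff_trans (Ha _ ha) (Hb _ ha).
case: (imp_tot nab) => hab.
  exists a; split; last exact: sbetter_indiff Sa (Hb _ hab).
  by move=> a' ha; apply: indiff_trans (Ha _ ha) (Hb _ (imp_trans ha hab)).
exists b; split; last exact: indiff_sbetter (Ha _ hab) Sb.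
by move=> a' hb; apply: indiff_trans (Ha _ (imp_trans hb hab)) (Hb _ hb).
Qed.

Lemma lex_asym p i j : lexpref vals c p i j -> ~ lexpref vals c p j i.
Proof.
move=> [a [Ha Sa]] [b [Hb Sb]].
have [eab|nab] := pselect (a = b).
  by subst b; exact: sbetter_asym Sa Sb.
case: (imp_tot nab) => hab.
  by apply: (sbetter_not_indiff Sa); apply: indiff_sym; apply: Hb.
by apply: (sbetter_not_indiff Sb); apply: indiff_sym; apply: Ha.
Qed.

Lemma not_indiff p a i j : ~ indiff vals c p a i j ->
  sbetter vals c p a i j \/ sbetter vals c p a j i.
Proof.
case: a => [k'|] /=.
  move=> h; case: (pref_tot (vals i k') (vals j k')) => h1.
    by left; split => // h2; apply: h.
  by right; split => // h2; apply: h.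
by move=> /eqP; rewrite neq_lt => /orP[]; [left|right].
Qed.

Lemma tie_indiff p i j : ~ lexpref vals c p i j -> ~ lexpref vals c p j i ->
  forall a, indiff vals c p a i j.
Proof.
move=> n1 n2.
pose m (a : attr K) := #|finset (fun b : attr K => `[< imp c b a >])|.
suff H : forall n a, (m a <= n)%N -> indiff vals c p a i j by move=> a; exact: (H _ a (leqnn _)).
elim=> [|n IH] a ha.
  have Hn : forall a', ~ imp c a' a.
    move=> a' ia'; have : (0 < m a)%N.
      by rewrite card_gt0; apply/set0Pn; exists a'; rewrite inE asboolE.
    by rewrite lt0n; move: ha; rewrite leqn0 => ->.
  apply: contrapT => hn.
  case: (not_indiff hn) => hs.
    by apply: n1; exists a; split => // a' /Hn.
  by apply: n2; exists a; split => // a' /Hn.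
have IHa : forall a', imp c a' a -> indiff vals c p a' i j.
  move=> a' ia'; apply: IH.
  have : (m a' < m a)%N.
    apply: proper_card; apply/properP; split.
      apply/fintype.subsetP => x; rewrite !inE => hx.
      exact: (imp_trans hx ia').
    exists a'; rewrite !inE ?asboolE //; apply/negP; rewrite ?asboolE; apply: imp_irr.
  by move=> h; rewrite -ltnS; exact: leq_trans h ha.
apply: contrapT => hn.
case: (not_indiff hn) => hs.
  by apply: n1; exists a; split.
by apply: n2; exists a; split => // a' /IHa /indiff_sym.
Qed.
Lemma all_indiff_nlex p i j : (forall a, indiff vals c p a i j) -> ~ lexpref vals c p i j.
Proof. by move=> H [a [_ /sbetter_not_indiff]]; apply. Qed.

Lemma lex_tie_r p i j k : lexpref vals c p i j -> (forall a, indiff vals c p a j k) ->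
  lexpref vals c p i k.
Proof.
move=> [a [Ha Sa]] H; exists a; split; last exact: sbetter_indiff Sa (H a).
by move=> a' /Ha h; exact: indiff_trans h (H a').
Qed.

Lemma lex_tie_l p i j k : (forall a, indiff vals c p a i j) -> lexpref vals c p j k ->
  lexpref vals c p i k.
Proof.
move=> H [a [Ha Sa]]; exists a; split; last exact: indiff_sbetter (H a) Sa.
by move=> a' /Ha h; exact: indiff_trans (H a') h.
Qed.

Definition rk p i j := ranks_above vals c p i j.

Lemma ranks_tie p i j : ~ lexpref vals c p i j -> ~ lexpref vals c p j i ->
  (forall a, indiff vals c p a i j) /\ (forall a, indiff vals c p a j i).
Proof. by move=> h1 h2; split; apply: tie_indiff. Qed.

Lemma ranks_asym p i j : rk p i j -> ~ rk p j i.
Proof.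
case=> [l|[n1 [n2 t1]]] [l'|[n1' [n2' t2]]].
- exact: lex_asym l l'.
- exact: n2' l.
- exact: n2 l'.
- by apply: (tb_irr (tb_trans t1 t2)).
Qed.

Lemma ranks_total p i j : i <> j -> rk p i j \/ rk p j i.
Proof.
move=> nij.
have [l|nl] := pselect (lexpref vals c p i j); first by left; left.
have [l'|nl'] := pselect (lexpref vals c p j i); first by right; left.
case: (tb_tot nij) => t; [left|right]; right; split => //.
Qed.

Lemma ranks_trans p i j k : rk p i j -> rk p j k -> rk p i k.
Proof.
case=> [l|[n1 [n2 t1]]] [l'|[n1' [n2' t2]]].
- by left; exact: lex_trans l l'.
- by left; apply: lex_tie_r l _; case: (ranks_tie n1' n2').
- by left; apply: lex_tie_l _ l'; case: (ranks_tie n1 n2).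
- have [H1 _] := ranks_tie n1 n2; have [H2 _] := ranks_tie n1' n2'.
  have H : forall a, indiff vals c p a i k by move=> a; exact: indiff_trans (H1 a) (H2 a).
  right; split; first exact: all_indiff_nlex.
  split; last exact: tb_trans t1 t2.
  by apply: all_indiff_nlex => a; apply: indiff_sym.
Qed.

Lemma lex_mono p p' i j : p' i - p' j <= p i - p j ->
  lexpref vals c p i j -> lexpref vals c p' i j.
Proof.
move=> hp [[k|] [Ha Sa]].
- have [iN|niN] := pselect (imp c None (Some k)).
  + have /= eqp := Ha _ iN.
    have : p' i <= p' j by rewrite -subr_le0; move: hp; rewrite eqp subrr.
    rewrite le_eqVlt => /orP[/eqP e|lt].
    * exists (Some k); split => //.
      by move=> [k'|] /Ha //=.
    * exists None; split => //.
      move=> [k'|] h; last by case: (imp_irr h).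
      exact: (Ha _ (imp_trans h iN)).
  + exists (Some k); split => //.
    by move=> [k'|] /=; [move/Ha|].
- exists None; split.
    by move=> [k'|] h; [exact: (Ha _ h)|case: (imp_irr h)].
  move: Sa => /= Sa; rewrite -subr_lt0; apply: le_lt_trans hp _.
  by rewrite subr_lt0.
Qed.

Lemma ranks_mono p p' i j : p' i - p' j <= p i - p j -> rk p i j -> rk p' i j.
Proof.
move=> hp [l|[n1 [n2 t]]]; first by left; exact: lex_mono hp l.
have [l|nl] := pselect (lexpref vals c p' i j); first by left.
right; split => //; split => //.
have [H _] := ranks_tie n1 n2.
move=> [[k|] [_ Sb]].
- by apply: (sbetter_not_indiff Sb); apply: indiff_sym; exact: (H (Some k)).
- move: Sb => /=; have /= e := H None.
  move: hp; rewrite e subrr subr_le0 => h Sb.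
  by have := le_lt_trans h Sb; rewrite ltxx.
Qed.

Lemma indiff_ext p p' a i j : (p i < p j) = (p' i < p' j) -> (p j < p i) = (p' j < p' i) ->
  indiff vals c p a i j <-> indiff vals c p' a i j.
Proof.
move=> h1 h2; case: a => [k|] //=.
have E (x y : R) : (x == y) = ~~ (y < x) && ~~ (x < y) by rewrite eq_le !leNgt.
have e : (p i == p j) = (p' i == p' j) by rewrite !E h1 h2.
by split => /eqP; [rewrite e|rewrite -e] => /eqP.
Qed.

Lemma sbetter_ext p p' a i j : (p i < p j) = (p' i < p' j) ->
  sbetter vals c p a i j <-> sbetter vals c p' a i j.
Proof. by move=> h1; case: a => [k|] //=; rewrite h1. Qed.

Lemma lex_ext p p' i j : (p i < p j) = (p' i < p' j) -> (p j < p i) = (p' j < p' i) ->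
  lexpref vals c p i j -> lexpref vals c p' i j.
Proof.
move=> h1 h2 [a [Ha Sa]]; exists a; split.
  by move=> a' /Ha; have := indiff_ext a' h1 h2; tauto.
by have := sbetter_ext a h1; tauto.
Qed.

Lemma ranks_ext p p' i j : (p i < p j) = (p' i < p' j) -> (p j < p i) = (p' j < p' i) ->
  rk p i j -> rk p' i j.
Proof.
move=> h1 h2 [l|[n1 [n2 t]]]; first by left; exact: lex_ext h1 h2 l.
right; split; first by move/(lex_ext (esym h1) (esym h2)).
by split => //; move/(lex_ext (esym h2) (esym h1)).
Qed.
Lemma updE (p : 'I_N -> R) k q j : upd p k q j = if j == k then q else p j.
Proof. by []. Qed.

Lemma upd_same (p : 'I_N -> R) k q : upd p k q k = q.
Proof. by rewrite updE eqxx. Qed.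

Lemma upd_other (p : 'I_N -> R) k q j : j <> k -> upd p k q j = p j.
Proof. by move=> /eqP /negbTE h; rewrite updE h. Qed.

Lemma buys_mono_others w p p' i : (forall j, j <> i -> p' j <= p j) -> p' i = p i ->
  buys vals c w p' i -> buys vals c w p i.
Proof.
move=> hle hi [[ci ai] H]; split; first by split => //; rewrite -hi.
move=> j [cj aj] nji.
have : rk p' i j by apply: H => //; split => //; apply: le_trans cj; exact: hle.
apply: ranks_mono; rewrite hi lerD2l lerN2; exact: hle.
Qed.

Lemma buys_own_lower w p k q : q <= p k -> buys vals c w p k ->
  buys vals c w (upd p k q) k.
Proof.
move=> hq [[ck ak] H]; split; first by split => //; rewrite upd_same; exact: le_trans ck.
move=> j [cj aj] njk.
have : rk p k j by apply: H => //; split => //; rewrite -(upd_other p q njk).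
apply: ranks_mono; rewrite upd_same upd_other // lerD2r //.
Qed.

Lemma buys_uniq w p i k : buys vals c w p i -> buys vals c w p k -> i <> k -> False.
Proof.
move=> [ci Hi] [ck Hk] nik.
exact: (ranks_asym (Hi _ ck (nesym nik)) (Hk _ ci nik)).
Qed.

Definition Gset w p i k :=
  buys vals c w p i /\ considers vals c w (upd p k 0) k /\ rk (upd p k 0) k i /\
  k <> i /\ p k = p i.

Lemma buys_loss w p p'' i : 0 < p i -> (forall j, 0 <= p j) -> p'' i = p i ->
  (forall j, j <> i -> p'' j = p j \/ (p'' j = 0 /\ p j <= p i)) ->
  buys vals c w p i -> buys vals c w p'' i \/ exists k, Gset w p i k.
Proof.
move=> pi0 p0 hi hj hb.
have [//|nb] := pselect (buys vals c w p'' i); first by left.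
right; move: (hb) => [[ci ai] H].
have ci'' : considers vals c w p'' i by split => //; rewrite hi.
have : ~ (forall j, considers vals c w p'' j -> j <> i -> rk p'' i j) by move=> h; apply: nb.
move=> /existsNP [j /not_implyP [cj /not_implyP [nji nr]]].
have r : rk p'' j i by case: (ranks_total p'' nji) => // h; case: nr.
case: cj => cj aj.
case: (hj j nji) => [e|[e hji]].
  apply: False_ind; apply: nr; apply: (ranks_ext (p := p)); rewrite ?hi ?e //.
  by apply: H => //; split => //; rewrite -e.
move: hji; rewrite le_eqVlt => /orP[/eqP eji|lji].
  exists j; split => //; split; first by split => //; rewrite upd_same -e.
  split; last by split.
  apply: (ranks_ext (p := p'')) r; rewrite upd_same (upd_other _ _ (nesym nji)) e hi //.
apply: False_ind; apply: nr; apply: (ranks_ext (p := p)); rewrite ?hi ?e.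
- by rewrite (lt_gtF lji) (lt_gtF pi0).
- by rewrite lji pi0.
apply: H => //; split => //; apply: le_trans ci; exact: ltW.
Qed.

Lemma Gset_buys w p i k q : 0 <= q -> q < p i -> Gset w p i k ->
  buys vals c w (upd p k q) k.
Proof.
move=> q0 qi [hb [[ck ak] [r [nki eki]]]].
move: (hb) => [[ci ai] H].
split; first by split => //; rewrite upd_same; apply: le_trans ci; exact: ltW.
move=> m [cm am] nmk.
have h0 : 0 < p i by apply: (le_lt_trans q0 qi).
have nik : i <> k by apply: nesym.
have rki : rk (upd p k q) k i.
  apply: (ranks_ext (p := upd p k 0)) r; rewrite !upd_same !(upd_other _ _ nik).
    by rewrite h0 qi.
  by rewrite (lt_gtF h0) (lt_gtF qi).
have [emi|nmi] := pselect (m = i); first by subst m.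
apply: ranks_trans rki _.
have : rk p i m.
  by apply: H => //; split => //; rewrite -(upd_other p q nmk).
by apply: ranks_ext; rewrite !(upd_other _ _ nik) !(upd_other _ _ nmk).
Qed.
End Comb.

Section MS.
Context d (T : measurableType d).
Implicit Types (A B : T -> Prop).
Lemma ms_and A B : measurable [set x | A x] -> measurable [set x | B x] ->
  measurable [set x | A x /\ B x].
Proof. exact: measurableI. Qed.
Lemma ms_or A B : measurable [set x | A x] -> measurable [set x | B x] ->
  measurable [set x | A x \/ B x].
Proof. exact: measurableU. Qed.
Lemma ms_not A : measurable [set x | A x] -> measurable [set x | ~ A x].
Proof. exact: measurableC. Qed.
Lemma ms_imp A B : measurable [set x | A x] -> measurable [set x | B x] ->
  measurable [set x | A x -> B x].
Proof.
move=> mA mB; rewrite (_ : [set x | A x -> B x] = [set x | ~ A x \/ B x]).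
  by apply: ms_or => //; apply: ms_not.
by apply/seteqP; split => x /=; [move=> h; have [/h|] := pselect (A x); [right|left]|case=> // h /h].
Qed.
Lemma ms_const (P : Prop) : measurable [set _ : T | P].
Proof. by have [h|h] := pselect P; [rewrite (_ : [set _ | P] = setT) // ; apply/seteqP; split|
  rewrite (_ : [set _ | P] = set0) //; apply/seteqP; split]. Qed.
Lemma ms_all (I : finType) (P : I -> T -> Prop) : (forall i, measurable [set x | P i x]) ->
  measurable [set x | forall i, P i x].
Proof.
move=> mP; rewrite (_ : [set x | forall i, P i x] = \bigcap_(i in [set: I]) [set x | P i x]).
  by apply: fin_bigcap_measurable => //; exact: finite_finset.
by apply/seteqP; split => x /= h i; [move=> _|]; apply: h.
Qed.
Lemma ms_ex (I : finType) (P : I -> T -> Prop) : (forall i, measurable [set x | P i x]) ->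
  measurable [set x | exists i, P i x].
Proof.
move=> mP; rewrite (_ : [set x | exists i, P i x] = \bigcup_(i in [set: I]) [set x | P i x]).
  by apply: fin_bigcup_measurable => //; exact: finite_finset.
by apply/seteqP; split => x /= [i h]; exists i.
Qed.
End MS.

Section MS2.
Context d (T : measurableType d) (R : realType).
Lemma ms_fst (E : T -> Prop) : measurable [set t | E t] ->
  measurable [set z : T * R | E z.1].
Proof.
move=> mE; rewrite (_ : [set z : T * R | E z.1] = [set t | E t] `*` setT).
  by apply: measurableX.
by apply/seteqP; split => z /=; [move=> h; split|case].
Qed.
Lemma ms_le (c : R) : measurable [set z : T * R | c <= z.2].
Proof.
rewrite (_ : [set z : T * R | c <= z.2] = setT `*` `[c, +oo[%classic).
  by apply: measurableX => //; exact: measurable_itv.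
by apply/seteqP; split => z /=; rewrite in_itv /= andbT; [move=> h; split|case].
Qed.
End MS2.

Section Meas.
Context (R : realType) (N K : nat) (V : 'I_K -> Type)
        (vals : 'I_N -> forall k : 'I_K, V k) (vbar : R)
        (d : measure_display) (Theta : measurableType d)
        (mu : probability Theta R) (other : Theta -> CLCprims N V)
        (f : Theta -> R -> R)
        (hmeas : prims_measurable vals other)
        (hdens : lipschitz_cond_density vbar f).

Lemma m_lex (p : 'I_N -> R) i j : measurable [set t | lexpref vals (other t) p i j].
Proof.
case: hmeas => mimp mpref madm mtb.
apply: ms_ex => a; apply: ms_and.
  apply: ms_all => a'; apply: ms_imp; first exact: mimp.
  by case: a' => [k|] /=; [apply: ms_and|exact: ms_const].
by case: a => [k|] /=; [apply: ms_and => //; apply: ms_not|exact: ms_const].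
Qed.

Lemma m_rk (p : 'I_N -> R) i j : measurable [set t | ranks_above vals (other t) p i j].
Proof.
case: hmeas => mimp mpref madm mtb.
apply: ms_or; first exact: m_lex.
by apply: ms_and; [apply: ms_not; exact: m_lex|apply: ms_and; [apply: ms_not; exact: m_lex|]].
Qed.

Lemma m_cons (p : 'I_N -> R) i :
  measurable [set z : Theta * R | considers vals (other z.1) z.2 p i].
Proof.
case: hmeas => mimp mpref madm mtb.
apply: ms_and; first exact: ms_le.
exact: (ms_fst (E := fun t => adm (other t) (vals i))).
Qed.

Lemma m_buys (p : 'I_N -> R) i :
  measurable [set z : Theta * R | buys vals (other z.1) z.2 p i].
Proof.
apply: ms_and; first exact: m_cons.
apply: ms_all => j; apply: ms_imp; first exact: m_cons.
apply: ms_imp; first exact: ms_const.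
exact: (ms_fst (E := fun t => ranks_above vals (other t) p i j) (m_rk p i j)).
Qed.


Definition Dset := `[0%R, vbar]%classic.

Definition Jint (X : Theta -> R -> Prop) : \bar R :=
  (\int[mu]_t \int[lebesgue_measure]_(w in `[0%R, vbar])
             (\1_[set w' | X t w'] w * f t w)%:E)%E.

Lemma demandE i p : demand vals vbar mu other f i p =
  fine (Jint (fun t w => buys vals (other t) w p i)).
Proof. by []. Qed.

Definition Hr (X : Theta -> R -> Prop) (z : Theta * R) : R :=
  \1_[set w | X z.1 w] z.2 * f z.1 z.2 * \1_Dset z.2.

Lemma Hr_ge0 X z : 0 <= Hr X z.
Proof. case: hdens => f0 _ _ _; by rewrite /Hr !mulr_ge0. Qed.

Lemma mHr X : measurable [set z : Theta * R | X z.1 z.2] ->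
  measurable_fun [set: Theta * R] (fun z => (Hr X z)%:E).
Proof.
move=> mX; case: hdens => _ mf _ _.
apply/measurable_EFinP; apply: measurable_funM; first apply: measurable_funM.
- rewrite (_ : (fun z : Theta * R => \1_[set w | X z.1 w] z.2) = \1_[set z : Theta * R | X z.1 z.2]).
    exact: measurable_indic.
  by apply/funext => z; rewrite !indicE.
- exact: mf.
- apply: measurableT_comp; last exact: measurable_snd.
  by apply: measurable_indic; exact: measurable_itv.
Qed.

Lemma J_prod X : measurable [set z : Theta * R | X z.1 z.2] ->
  Jint X = (\int[mu \x lebesgue_measure]_z (Hr X z)%:E)%E.
Proof.
move=> mX; rewrite fubini_tonelli1 //; last by move=> z; rewrite lee_fin Hr_ge0.
  2: exact: mHr.
apply: eq_integral => t _; rewrite integral_mkcond /fubini_F.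
apply: eq_integral => w _; rewrite patchE /Hr /=.
by case: ifP => h; rewrite [\1_Dset w]indicE /Dset h ?mulr1 ?mulr0.
Qed.
End Meas.

Section J.
Context (R : realType) (N K : nat) (V : 'I_K -> Type)
        (vals : 'I_N -> forall k : 'I_K, V k) (vbar : R)
        (d : measure_display) (Theta : measurableType d)
        (mu : probability Theta R) (other : Theta -> CLCprims N V)
        (f : Theta -> R -> R)
        (hmeas : prims_measurable vals other)
        (hdens : lipschitz_cond_density vbar f).

Local Notation J := (Jint vbar mu f).
Local Notation Hr := (Hr vbar f).
Local Notation MX X := (measurable [set z : Theta * R | X z.1 z.2]).

Let g (z : Theta * R) := f z.1 z.2 * \1_(Dset vbar) z.2.
Let g_ge0 z : 0 <= g z.
Proof. by case: hdens => f0 _ _ _; rewrite /g mulr_ge0. Qed.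

Lemma HrE X z : Hr X z = if `[< X z.1 z.2 >] then g z else 0.
Proof.
rewrite /Hr /g indicE; case: asboolP => h.
  by rewrite mem_set // mul1r.
by rewrite memNset // mul0r mul0r.
Qed.

Lemma J_ge0 X : (0 <= J X)%E.
Proof.
apply: integral_ge0 => t _; apply: integral_ge0 => w _.
by case: hdens => f0 _ _ _; rewrite lee_fin mulr_ge0.
Qed.

Lemma J_mono X Y : MX X -> MX Y -> (forall t w, X t w -> Y t w) -> (J X <= J Y)%E.
Proof.
move=> mX mY XY; rewrite (J_prod mu hdens mX) (J_prod mu hdens mY).
apply: ge0_le_integral => //.
- by move=> z _; rewrite lee_fin (Hr_ge0 hdens).
- exact: (mHr hdens).
- exact: (mHr hdens).
move=> z _; rewrite lee_fin !HrE.
case: asboolP => hx; case: asboolP => hy; rewrite ?lexx ?g_ge0 //.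
by case: hy; apply: XY.
Qed.

Lemma J_sub X Y : MX X -> MX Y ->
  (J (fun t w => X t w \/ Y t w) <= J X + J Y)%E.
Proof.
move=> mX mY.
have mXY : MX (fun t w => X t w \/ Y t w) by exact: ms_or.
rewrite (J_prod mu hdens mX) (J_prod mu hdens mY) (J_prod mu hdens mXY).
rewrite -ge0_integralD //; last 4 first.
- by move=> z _; rewrite lee_fin (Hr_ge0 hdens).
- exact: (mHr hdens).
- by move=> z _; rewrite lee_fin (Hr_ge0 hdens).
- exact: (mHr hdens).
apply: ge0_le_integral => //.
- by move=> z _; rewrite lee_fin (Hr_ge0 hdens).
- exact: (mHr hdens).
- by apply: emeasurable_funD; exact: (mHr hdens).
move=> z _; rewrite -EFinD lee_fin !HrE.
case: asboolP => hxy; case: asboolP => hx; case: asboolP => hy;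
  rewrite ?addr0 ?add0r ?lerDl ?lerDr ?addr_ge0 ?g_ge0 //.
by case: hxy => [/hx|/hy].
Qed.

Lemma J_disj X Y : MX X -> MX Y -> (forall t w, X t w -> Y t w -> False) ->
  J (fun t w => X t w \/ Y t w) = (J X + J Y)%E.
Proof.
move=> mX mY dXY.
have mXY : MX (fun t w => X t w \/ Y t w) by exact: ms_or.
rewrite (J_prod mu hdens mX) (J_prod mu hdens mY) (J_prod mu hdens mXY).
rewrite -ge0_integralD //; last 4 first.
- by move=> z _; rewrite lee_fin (Hr_ge0 hdens).
- exact: (mHr hdens).
- by move=> z _; rewrite lee_fin (Hr_ge0 hdens).
- exact: (mHr hdens).
apply: eq_integral => z _; rewrite -EFinD !HrE.
case: asboolP => hxy; case: asboolP => hx; case: asboolP => hy;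
  rewrite ?addr0 ?add0r //.
all: first [by case: (dXY _ _ hx hy)|by case: hxy; left|by case: hxy; right|by case: hxy => [/hx|/hy]].
Qed.

Lemma J_all : J (fun _ _ => True) = 1%E.
Proof.
rewrite /Jint.
case: hdens => _ _ f1 _.
transitivity (\int[mu]_t (cst 1%E) t)%E.
  apply: eq_integral => t _; rewrite -[RHS](f1 t); apply: eq_integral => w _.
  by rewrite indicE mem_set // mul1r.
rewrite integral_cst // mul1e; exact: probability_setT.
Qed.

Lemma J_le1 X : MX X -> (J X <= 1)%E.
Proof. move=> mX; rewrite -J_all; apply: J_mono => //; exact: ms_const. Qed.

Definition Dm X := fine (J X).

Lemma DmE X : MX X -> J X = (Dm X)%:E.
Proof.
move=> mX; rewrite /Dm fineK // ge0_fin_numE ?J_ge0 //.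
by apply: le_lt_trans (J_le1 mX) _; rewrite ltey.
Qed.

Lemma Dm_ge0 X : 0 <= Dm X.
Proof. by rewrite /Dm fine_ge0 // J_ge0. Qed.

Lemma Dm_le1 X : MX X -> Dm X <= 1.
Proof. by move=> mX; rewrite -lee_fin -DmE //; exact: J_le1. Qed.

Lemma J_fin X : MX X -> J X \is a fin_num.
Proof.
move=> mX; rewrite ge0_fin_numE ?J_ge0 //.
by apply: le_lt_trans (J_le1 mX) _; rewrite ltey.
Qed.

Lemma Dm_mono X Y : MX X -> MX Y -> (forall t w, X t w -> Y t w) -> Dm X <= Dm Y.
Proof.
move=> mX mY h; apply: fine_le; [exact: J_fin|exact: J_fin|exact: J_mono].
Qed.

Lemma Dm_sub X Y : MX X -> MX Y -> Dm (fun t w => X t w \/ Y t w) <= Dm X + Dm Y.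
Proof.
move=> mX mY; have mXY : MX (fun t w => X t w \/ Y t w) by exact: ms_or.
rewrite /Dm -fineD; [|exact: J_fin|exact: J_fin].
apply: fine_le; [exact: J_fin|by rewrite fin_numD !J_fin|exact: J_sub].
Qed.

Lemma Dm_disj X Y : MX X -> MX Y -> (forall t w, X t w -> Y t w -> False) ->
  Dm (fun t w => X t w \/ Y t w) = Dm X + Dm Y.
Proof.
move=> mX mY h; rewrite /Dm -fineD; [|exact: J_fin|exact: J_fin].
by congr fine; exact: J_disj.
Qed.
End J.

Lemma open_ball_ex (R : realType) (U : set R) x : open U -> U x ->
  exists2 e : R, 0 < e & forall y, `|x - y| < e -> U y.
Proof.
move=> oU Ux.
have : nbhs x U by apply: open_nbhs_nbhs; split.
move/nbhs_ballP => [e e0 he]; exists e => // y hy; by apply: he.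
Qed.

Section Main.
Context (R : realType) (N K : nat) (V : 'I_K -> Type)
        (vals : 'I_N -> forall k : 'I_K, V k) (vbar : R)
        (d : measure_display) (Theta : measurableType d)
        (mu : probability Theta R) (other : Theta -> CLCprims N V)
        (f : Theta -> R -> R)
        (hvalid : forall t, valid_prims (other t))
        (hmeas : prims_measurable vals other)
        (hdens : lipschitz_cond_density vbar f).

Local Notation Dm := (Dm vbar mu f).
Local Notation MX X := (measurable [set z : Theta * R | X z.1 z.2]).
Local Notation Rev := (revenue vals vbar mu other f).

Definition Bset (p : 'I_N -> R) i := fun t w => buys vals (other t) w p i.

Lemma mB p i : MX (Bset p i).
Proof. exact: m_buys. Qed.

Lemma RevE i p : Rev i p = p i * Dm (Bset p i).
Proof. by []. Qed.

Lemma Dm_empty X : MX X -> (forall t w, ~ X t w) -> Dm X = 0.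
Proof.
move=> mX h.
have e1 := Dm_disj mu hdens mX mX (fun t w a _ => h t w a).
have e2 : Dm (fun t w => X t w \/ X t w) <= Dm X.
  by apply: Dm_mono => //; [exact: ms_or|move=> t w []].
move: e1 e2 (Dm_ge0 mu hdens X).
generalize (Dm X) (Dm (fun t w => X t w \/ X t w)) => a b; lra.
Qed.

Lemma Dm_null_ex (G : 'I_N -> Theta -> R -> Prop) : (forall k, MX (G k)) ->
  (forall k, Dm (G k) = 0) -> Dm (fun t w => exists k, G k t w) = 0.
Proof.
move=> mG G0.
have mE : forall s : seq 'I_N, MX (fun t w => exists k, k \in s /\ G k t w).
  by move=> s; apply: ms_ex => k; apply: ms_and; [exact: ms_const|exact: mG].
have H : forall s : seq 'I_N, Dm (fun t w => exists k, k \in s /\ G k t w) = 0.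
  elim=> [|h s IH].
    by apply: Dm_empty => // t w [k []].
  have h1 : Dm (fun t w => exists k, k \in h :: s /\ G k t w) <=
            Dm (fun t w => G h t w \/ exists k, k \in s /\ G k t w).
    apply: Dm_mono => //; first by apply: ms_or.
    move=> t w [k []]; rewrite in_cons => /orP[/eqP -> ?|ks ?]; first by left.
    by right; exists k.
  have h2 := Dm_sub mu hdens (X := G h) (Y := fun t w => exists k, k \in s /\ G k t w) (mG h) (mE s).
  move: h1 h2 (Dm_ge0 mu hdens (fun t w => exists k, k \in h :: s /\ G k t w)).
  rewrite IH G0.
  generalize (Dm (fun t w => exists k, k \in h :: s /\ G k t w))
    (Dm (fun t w => G h t w \/ exists k, k \in s /\ G k t w)) => a b; lra.
have h1 : Dm (fun t w => exists k, G k t w) <=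
          Dm (fun t w => exists k, k \in enum 'I_N /\ G k t w).
  apply: Dm_mono => //; first by apply: ms_ex => k; exact: mG.
  by move=> t w [k ?]; exists k; rewrite mem_enum.
move: h1 (Dm_ge0 mu hdens (fun t w => exists k, G k t w)); rewrite H.
generalize (Dm (fun t w => exists k, G k t w)) => a; lra.
Qed.
End Main.

Section KL.
Context (R : realType) (N K : nat) (V : 'I_K -> Type)
        (vals : 'I_N -> forall k : 'I_K, V k) (vbar : R)
        (d : measure_display) (Theta : measurableType d)
        (mu : probability Theta R) (other : Theta -> CLCprims N V)
        (f : Theta -> R -> R)
        (hvalid : forall t, valid_prims (other t))
        (hmeas : prims_measurable vals other)
        (hdens : lipschitz_cond_density vbar f).

Local Notation Dm := (Dm vbar mu f).
Local Notation MX X := (measurable [set z : Theta * R | X z.1 z.2]).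
Local Notation Rev := (revenue vals vbar mu other f).
Local Notation B := (Bset vals other).

Variable (p : 'I_N -> R).
Hypothesis hL : local_nash vbar Rev p.

Definition Gk i k := fun t w => Gset vals (other t) w p i k.

Lemma mGk i k : MX (Gk i k).
Proof.
apply: ms_and; first exact: m_buys.
apply: ms_and; first exact: m_cons.
apply: ms_and.
  exact: (ms_fst (E := fun t => ranks_above vals (other t) (upd p k 0) k i) (m_rk hmeas _ _ _)).
by apply: ms_and; exact: ms_const.
Qed.

Lemma G_null i k : 0 < p i -> Dm (Gk i k) = 0.
Proof.
move=> pi0.
have [[nki eki]|nc] := pselect (k <> i /\ p k = p i); last first.
  apply: (Dm_empty mu hdens (mGk i k)).
  by move=> t w [_ [_ [_ h]]]; apply: nc.
case: hL => hb hU; case: (hU k) => U [oU Uk HU].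
have [e e0 he] := open_ball_ex oU Uk.
have key : forall eps, 0 < eps -> eps < e -> eps < p i -> p i * Dm (Gk i k) <= eps.
  move=> eps eps0 epse epsp.
  pose q := p i - eps.
  have q0 : 0 <= q by rewrite /q subr_ge0 ltW.
  have qi : q < p i by rewrite /q ltrBlDr ltrDl.
  have Uq : U q by apply: he; rewrite eki /q opprB addrC subrK ger0_norm ?ltW.
  have hR := HU q (subset_closure Uq).
  rewrite !RevE upd_same eki in hR.
  have mBG : MX (fun t w => B p k t w \/ Gk i k t w).
    by apply: ms_or; [exact: mB|exact: mGk].
  have h1 : Dm (fun t w => B p k t w \/ Gk i k t w) <= Dm (B (upd p k q) k).
    apply: Dm_mono => //; first exact: mB.
    move=> t w [hb'|hg].
      apply: (buys_own_lower (hvalid t)) => //; by rewrite eki ltW.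
    exact: (Gset_buys (hvalid t) q0 qi hg).
  have h2 : Dm (fun t w => B p k t w \/ Gk i k t w) = Dm (B p k) + Dm (Gk i k).
    apply: Dm_disj => //; [exact: mB|exact: mGk|].
    move=> t w hb' [hbi _].
    exact: (buys_uniq (hvalid t) hbi hb' (nesym nki)).
  have h3 := Dm_le1 mu hdens (X := fun t w => B p k t w \/ Gk i k t w) mBG.
  have h4 : q * Dm (fun t w => B p k t w \/ Gk i k t w) <= q * Dm (B (upd p k q) k).
    by apply: ler_wpM2l.
  move: hR h1 h2 h3 h4 (Dm_ge0 mu hdens (B p k)) (Dm_ge0 mu hdens (Gk i k)).
  rewrite /q.
  generalize (Dm (fun t w => B p k t w \/ Gk i k t w)) (Dm (B (upd p k (p i - eps)) k))
    (Dm (B p k)) (Dm (Gk i k)) => a b c g.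
  move=> hR h1 h2 h3 h4 c0 g0.
  have h5 : eps * a <= eps by rewrite -[X in _ <= X]mulr1 ler_wpM2l // ltW.
  nra.
apply/eqP; rewrite eq_le (Dm_ge0 mu hdens) andbT; apply/negP => /negP; rewrite -ltNge => g0.
pose m := Num.min e (Num.min (p i) (p i * Dm (Gk i k))).
have m0 : 0 < m by rewrite /m !lt_min e0 pi0 mulr_gt0.
have me : m <= e by rewrite /m ge_min lexx.
have mp : m <= p i by rewrite /m !ge_min lexx orbT.
have mg : m <= p i * Dm (Gk i k) by rewrite /m !ge_min lexx !orbT.
have := key (m / 2).
move: m0 me mp mg g0 pi0; generalize (Dm (Gk i k)) => g m0 me mp mg g0 pi0 h.
have : p i * g <= m / 2 by apply: h; lra.
have : 0 < p i * g by apply: mulr_gt0.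
lra.
Qed.

Lemma KL i p'' : 0 < p i -> p'' i = p i ->
  (forall j, j <> i -> p'' j = p j \/ (p'' j = 0 /\ p j <= p i)) ->
  Dm (B p i) <= Dm (B p'' i).
Proof.
move=> pi0 hi hj.
have p0 : forall j, 0 <= p j by move=> j; case: hL => hb _; case/andP: (hb j).
have mE : MX (fun t w => exists k, Gk i k t w) by apply: ms_ex => k; exact: mGk.
have mB'' : MX (B p'' i) by exact: mB.
have h1 : Dm (B p i) <= Dm (fun t w => B p'' i t w \/ exists k, Gk i k t w).
  apply: (Dm_mono mu hdens); [exact: mB|by apply: ms_or|].
  by move=> t w hb; exact: (buys_loss (hvalid t) pi0 p0 hi hj hb).
have h2 := Dm_sub mu hdens (X := B p'' i) (Y := fun t w => exists k, Gk i k t w) mB'' mE.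
have h3 : Dm (fun t w => exists k, Gk i k t w) = 0.
  by apply: (Dm_null_ex hdens (G := Gk i) (fun k => mGk i k)) => k; exact: G_null.
move: h1 h2; rewrite h3.
generalize (Dm (B p i)) (Dm (B p'' i))
  (Dm (fun t w => B p'' i t w \/ exists k, Gk i k t w)) => a b c; lra.
Qed.
End KL.

Lemma sort_perm (R : realType) N (p : 'I_N -> R) :
  exists pi : {perm 'I_N}, forall l l' : 'I_N, (l <= l')%N -> p (pi l') <= p (pi l).
Proof.
case: N p => [|n] p; first by exists 1%g => -[].
pose leT := fun a b : 'I_n.+1 => p b <= p a.
pose s := sort leT (enum 'I_n.+1).
have ss : size s = n.+1 by rewrite size_sort size_enum_ord.
have us : uniq s by rewrite sort_uniq enum_uniq.
have srt : sorted leT s by apply: sort_sorted => a b; exact: le_total.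
pose sig (l : 'I_n.+1) := nth ord0 s l.
have inj : injective sig.
  move=> a b /eqP; rewrite nth_uniq ?ss // => /eqP; exact: val_inj.
exists (perm inj) => l l' hll'; rewrite !permE.
apply: (sorted_leq_nth (leT := leT)) => //.
- by move=> y x z h1 h2; exact: le_trans h2 h1.
- by move=> x; exact: lexx.
- by rewrite inE ss.
- by rewrite inE ss.
Qed.

Unset Implicit Arguments. Set Strict Implicit.
Theorem theorem4p2 (R : realType) (N K : nat) (V : 'I_K -> Type)
    (vals : 'I_N -> forall k : 'I_K, V k) (vbar : R) (hvbar : 0 < vbar)
    (d : measure_display) (Theta : measurableType d)
    (mu : probability Theta R) (other : Theta -> CLCprims N V)
    (f : Theta -> R -> R)
    (hvalid : forall t, valid_prims (other t))
    (hmeas : prims_measurable vals other)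
    (hdens : lipschitz_cond_density vbar f)
    (p : 'I_N -> R) :
  local_nash vbar (revenue vals vbar mu other f) p ->
  exists pi : {perm 'I_N},
    valid_order_price vbar (revenue vals vbar mu other f) pi p.
Proof.
move=> hL; have [hb hU] := hL.
have p0 j : 0 <= p j by case/andP: (hb j).
have [pi hpi] := sort_perm p.
exists pi; split => // l S.
set i := pi l.
have hS : forall j, j \in S -> p i <= p j.
  by move=> j /imsetP[j' /[!inE] jl ->]; apply: hpi; exact: ltnW.
have hnS : forall j, j \notin S -> j <> i -> p j <= p i.
  move=> j jS ji; rewrite -(permKV pi j); apply: hpi.
  rewrite leqNgt; apply/negP => lt; move/negP: jS; apply; apply/imsetP.
  by exists (pi^-1 j)%g; rewrite ?inE // permKV.
have iS : i \notin S.
  apply/negP => /imsetP[j' /[!inE] jl /perm_inj e]; subst j'.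
  by rewrite ltnn in jl.
have hpmin : p i <= pmin vbar p S.
  rewrite /pmin; case: pickP => [j0 j0S|_]; last by case/andP: (hb i).
  apply: (big_ind (fun x => p i <= x)) => //; first exact: hS.
  by move=> x y hx hy; rewrite le_min hx hy.
case: (hU i) => U [oU Ui HU]; have [e e0 he] := open_ball_ex oU Ui.
split; first by rewrite p0 hpmin.
exists e; split; first exact: e0.
move=> q /andP[q0 qm] hq.
set p' := Defs.restrict p S.
have h1 : revenue vals vbar mu other f i (upd p' i q) <=
          revenue vals vbar mu other f i (upd p i q).
  rewrite RevE.
  rewrite RevE.
  rewrite !upd_same.
  apply: ler_wpM2l.
  exact: q0.
  apply: (Dm_mono mu hdens); [exact: mB|exact: mB|].
  move=> t w; apply: (buys_mono_others (hvalid t)); last by rewrite !upd_same.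
  move=> j ji; rewrite !upd_other // /p' /Defs.restrict.
  by case: ifP => _ //.
have h2 : revenue vals vbar mu other f i (upd p i q) <=
          revenue vals vbar mu other f i p.
  by apply: HU; apply: subset_closure; apply: he; rewrite distrC.
have h3 : revenue vals vbar mu other f i p <=
          revenue vals vbar mu other f i (upd p' i (p i)).
  rewrite RevE.
  rewrite RevE.
  rewrite upd_same.
  have Hkl : 0 < p i -> Dm vbar mu f (Bset vals other p i) <=
      Dm vbar mu f (Bset vals other (upd p' i (p i)) i).
    move=> pip; apply: (KL hvalid hmeas hdens hL pip (upd_same _ _ _)).
    move=> j ji; rewrite upd_other // /p' /Defs.restrict.
    case: ifP => jS; first by left.
    by right; split => //; apply: hnS => //; rewrite jS.
  have D0 := Dm_ge0 mu hdens (Bset vals other p i).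
  move: Hkl D0 (p0 i).
  generalize (Dm vbar mu f (Bset vals other p i))
    (Dm vbar mu f (Bset vals other (upd p' i (p i)) i)) (p i) => a b x.
  move=> Hkl D0 x0.
  have [x0'|xp] := eqVneq x 0; first by rewrite x0' !mul0r.
  have xp' : 0 < x by rewrite lt_neqAle eq_sym xp x0.
  by apply: ler_wpM2l => //; apply: Hkl.
exact: le_trans h1 (le_trans h2 h3).
Qed.
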